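(* For $n\ge 3$: $\chi'_{m\Sigma}(K_n)=3$ if $n$ is odd; $\chi'_{m\Sigma}(K_n)=4$ if $n$ is even and $n\ge 6$; and $\chi'_{m\Sigma}(K_4)=5$.
   Context: A $k$-edge-coloring of $G$ is any map $c:E(G)\to\{1,\dots,k\}$ (adjacent edges may share colors). It induces $\sigma_c(v)=\sum_{u\in N(v)}c(vu)$. The coloring is neighbor sum distinguishing (NSD) if $\sigma_c(u)\ne\sigma_c(v)$ for every edge $uv$. It is majority if every vertex $v$ is incident to at most $d(v)/2$ edges of each single color. $\chi'_{m\Sigma}(G)$ denotes the least $k$ such that $G$ has a $k$-edge-coloring that is both majority and NSD. *)

(* Defs.v *)
From mathcomp Require Import all_boot all_order.
Set Implicit Arguments. Unset Strict Implicit. Unset Printing Implicit Defensive.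

(* An edge uv is identified with the
   2-element set [set u; v]; an edge-coloring is thus a function on sets
   (only its values on edges matter). *)

Definition simple_graph (T : finType) (adj : rel T) : Prop :=
  (forall u v, adj u v = adj v u) /\ (forall v, ~~ adj v v).

Definition complete_graph (n : nat) : rel 'I_n := fun u v => u != v.
Arguments complete_graph n : clear implicits.

Definition deg (T : finType) (adj : rel T) (v : T) : nat := #|[set u | adj v u]|.

Definition is_k_edge_coloring (T : finType) (adj : rel T) (k : nat)
    (c : {set T} -> nat) : Prop :=
  forall u v, adj u v -> 1 <= c [set u; v] <= k.

Definition sigma (T : finType) (adj : rel T) (c : {set T} -> nat) (v : T) : nat :=
  \sum_(u | adj v u) c [set v; u].

Definition nsd (T : finType) (adj : rel T) (c : {set T} -> nat) : Prop :=
  forall u v, adj u v -> sigma adj c u <> sigma adj c v.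

Definition majority (T : finType) (adj : rel T) (c : {set T} -> nat) : Prop :=
  forall (v : T) (i : nat), 2 * #|[set u | adj v u & c [set v; u] == i]| <= deg adj v.

Definition has_mNSD_coloring (T : finType) (adj : rel T) (k : nat) : Prop :=
  exists c : {set T} -> nat,
    [/\ is_k_edge_coloring adj k c, majority adj c & nsd adj c].

Definition chi_mSigma_eq (T : finType) (adj : rel T) (k : nat) : Prop :=
  has_mNSD_coloring adj k /\ (forall j, j < k -> ~ has_mNSD_coloring adj j).

(* Main.v *)
Require Import Defs.
From mathcomp Require Import all_boot all_order.
From mathcomp Require Import zify.


Fixpoint sumf (n : nat) (F : nat -> nat) : nat :=
  if n is n'.+1 then sumf n' F + F n' else 0.

Lemma sumfS n F : sumf n.+1 F = sumf n F + F n.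
Proof. by []. Qed.

Lemma sumf_ext n F G : (forall u, u < n -> F u = G u) -> sumf n F = sumf n G.
Proof.
elim: n => //= n IH H; rewrite IH ?H //= => u Hu; apply: H; lia.
Qed.

Lemma sumf_const n p : sumf n (fun _ => p) = n * p.
Proof. elim: n => //= n ->; lia. Qed.

Lemma sumf_cat a b F : sumf (a + b) F = sumf a F + sumf b (fun u => F (a + u)).
Proof.
elim: b => [|b IH]; first by rewrite addn0 /= addn0.
by rewrite addnS /= IH addnA.
Qed.

Lemma big_sumf n (F : nat -> nat) : \sum_(u < n) F u = sumf n F.
Proof.
elim: n => [|n IH]; first by rewrite big_ord0.
by rewrite big_ord_recr /= IH.
Qed.

Definition gs (h : nat -> nat -> nat) (v u : nat) :=
  if v < u then h v u else if u < v then h u v else 0.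

Lemma gsC h v u : gs h v u = gs h u v.
Proof. rewrite /gs; case: ltngtP => //. Qed.

Lemma gsvv h v : gs h v v = 0.
Proof. by rewrite /gs ltnn. Qed.

Definition cset n (h : nat -> nat -> nat) (S : {set 'I_n}) : nat :=
  \sum_(x in S) \sum_(y in S) (if x < y then h x y else 0).

Arguments cset {n} h S.

Lemma cset2 n h (x y : 'I_n) : x != y -> cset h [set x; y] = gs h x y.
Proof.
move=> xy.
have xy' : x \notin [set y] by rewrite inE.
rewrite /cset big_setU1 //= big_set1 !big_setU1 //= !big_set1 !ltnn.
rewrite /gs; have : (x : nat) != y by [].
case: ltngtP => //= _ _; lia.
Qed.

Lemma deg_complete n (v : 'I_n) : deg (complete_graph n) v = n.-1.
Proof.
rewrite /deg -[in RHS](card_ord n) -(cardsC1 v); apply: eq_card => u.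
by rewrite !inE /complete_graph eq_sym.
Qed.

Lemma card_sum_pq n (P Q : pred 'I_n) :
  #|[set u | P u & Q u]| = \sum_(u | P u) (Q u : nat).
Proof.
rewrite -sum1_card big_mkcond [RHS]big_mkcond /=; apply: eq_bigr => u _.
by rewrite inE; case: (P u); case: (Q u).
Qed.

Lemma construct n k h :
 (forall v u, v < n -> u < n -> v != u -> 1 <= gs h v u <= k) ->
 (forall v i, v < n -> 0 < i -> 2 * sumf n (fun u => gs h v u == i) <= n.-1) ->
 (forall v w, v < n -> w < n -> sumf n (gs h v) = sumf n (gs h w) -> v = w) ->
 has_mNSD_coloring (complete_graph n) k.
Proof.
move=> Hk Hm Hi; exists (cset h); split.
- move=> u v /= uv; rewrite cset2 //; exact: Hk.
- move=> v i; rewrite deg_complete card_sum_pq.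
  case: i => [|i].
  + rewrite big1 // => u /= vu; rewrite cset2 //.
    have := Hk v u (ltn_ord v) (ltn_ord u) vu.
    by case: (gs h v u).
  + have -> : \sum_(u | complete_graph n v u) (cset h [set v; u] == i.+1 : nat)
       = sumf n (fun u => gs h v u == i.+1).
      rewrite -big_sumf big_mkcond /=; apply: eq_bigr => u _.
      rewrite /complete_graph; case: eqP => [<-|/eqP vu] /=.
      * by rewrite gsvv.
      * by rewrite cset2.
    exact: Hm.
- have E : forall w : 'I_n, sigma (complete_graph n) (cset h) w = sumf n (gs h w).
    move=> w; rewrite /sigma -big_sumf big_mkcond /=; apply: eq_bigr => u _.
    rewrite /complete_graph; case: eqP => [<-|/eqP vu] /=.
    * by rewrite gsvv.
    * by rewrite cset2.
  move=> u v /= uv; rewrite !E => /(Hi _ _ (ltn_ord u) (ltn_ord v)) /val_inj.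
  by move/eqP: uv.
Qed.


Definition lv u := u.+1 %/ 2.
Definition ho i j :=
  if odd j then (if odd (lv i + lv j) then 1 else 2)
  else (if i.+1 == j then 2 else if odd (lv i + lv j) then 3 else 2).

Lemma ho_range v u : v != u -> 1 <= gs ho v u <= 3.
Proof. move=> H; rewrite /gs /ho; do ! case: ifP => //; lia. Qed.

Lemma lvN m : lv m.*2.+1 = m.+1.
Proof. rewrite /lv; lia. Qed.
Lemma lvN1 m : lv m.*2.+2 = m.+1.
Proof. rewrite /lv; lia. Qed.

Lemma sum_par m p q :
  sumf m.*2.+1 (fun u => if odd (lv u + m) then q else p) = m.+1 * p + m * q.
Proof.
elim: m p q => [|m IH] p q; first by rewrite /= /lv /=; lia.
rewrite doubleS 2!sumfS.
rewrite (@sumf_ext _ _ (fun u => if odd (lv u + m) then p else q)); last first.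
  by move=> u _; rewrite addnS /=; case: (odd _).
rewrite IH lvN lvN1 addnn odd_double /=; lia.
Qed.

Definition Inv_o m :=
 [/\ forall v i, v < m.*2.+1 -> 0 < i -> sumf m.*2.+1 (fun u => gs ho v u == i) <= m,
     forall v, v < m.*2.+1 -> 3*m <= sumf m.*2.+1 (gs ho v) <= 5*m,
     forall v w, v < m.*2.+1 -> w < m.*2.+1 ->
        sumf m.*2.+1 (gs ho v) = sumf m.*2.+1 (gs ho w) -> v = w &
     forall v, v < m.*2.+1 -> odd (lv v + m) ->
        (sumf m.*2.+1 (fun u => gs ho v u == 2)).+1 <= m].

Lemma ho_old1 m v : v < m.*2.+1 ->
  gs ho v m.*2.+1 = if odd (lv v + m) then 2 else 1.
Proof.
move=> H; rewrite /gs ifT // /ho oddS odd_double /= lvN addnS /=.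
by case: (odd _).
Qed.

Lemma ho_old2 m v : v < m.*2.+1 ->
  gs ho v m.*2.+2 = if odd (lv v + m) then 2 else 3.
Proof.
move=> H; rewrite /gs ifT; last by lia.
rewrite /ho !oddS odd_double /= ifF; last by apply/eqP; lia.
rewrite lvN1 addnS /=; by case: (odd _).
Qed.

Lemma ho_ab m : gs ho m.*2.+1 m.*2.+2 = 2.
Proof. by rewrite /gs ltnSn /ho !oddS odd_double /= eqxx. Qed.

Lemma Inv_o_step m : Inv_o m -> Inv_o m.+1.
Proof.
case=> HA HB HC HD.
have SN : forall F, sumf (m.+1).*2.+1 F = sumf m.*2.+1 F + F m.*2.+1 + F m.*2.+2.
  by move=> F; rewrite doubleS.
have Sold : forall v, v < m.*2.+1 -> sumf (m.+1).*2.+1 (gs ho v) = sumf m.*2.+1 (gs ho v) + 4.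
  move=> v vN; rewrite SN ho_old1 // ho_old2 //; case: (odd _); lia.
have Ca : forall i, sumf (m.+1).*2.+1 (fun u => gs ho m.*2.+1 u == i)
    = m.+1 * (1 == i) + m * (2 == i) + (0 == i) + (2 == i).
  move=> i; rewrite SN gsvv (ho_ab m).
  rewrite (@sumf_ext _ _ (fun u => if odd (lv u + m) then (2 == i) : nat else (1 == i) : nat)).
    by rewrite sum_par.
  by move=> u uN; rewrite gsC ho_old1 //; case: (odd _).
have Cb : forall i, sumf (m.+1).*2.+1 (fun u => gs ho m.*2.+2 u == i)
    = m.+1 * (3 == i) + m * (2 == i) + (2 == i) + (0 == i).
  move=> i; rewrite SN gsvv (gsC _ m.*2.+2 m.*2.+1) (ho_ab m).
  rewrite (@sumf_ext _ _ (fun u => if odd (lv u + m) then (2 == i) : nat else (3 == i) : nat)).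
    by rewrite sum_par.
  by move=> u uN; rewrite gsC ho_old2 //; case: (odd _).
have Sa : sumf (m.+1).*2.+1 (gs ho m.*2.+1) = 3 * m.+1.
  rewrite SN gsvv (ho_ab m).
  rewrite (@sumf_ext _ _ (fun u => if odd (lv u + m) then 2 else 1)).
    by rewrite sum_par; lia.
  by move=> u uN; rewrite gsC ho_old1.
have Sb : sumf (m.+1).*2.+1 (gs ho m.*2.+2) = 5 * m.+1.
  rewrite SN gsvv (gsC _ m.*2.+2 m.*2.+1) (ho_ab m).
  rewrite (@sumf_ext _ _ (fun u => if odd (lv u + m) then 2 else 3)).
    by rewrite sum_par; lia.
  by move=> u uN; rewrite gsC ho_old2.
have cases : forall v, v < (m.+1).*2.+1 -> [\/ v < m.*2.+1, v = m.*2.+1 | v = m.*2.+2].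
  move=> v; rewrite doubleS => H.
  have [vN|vN] := ltnP v m.*2.+1; first by constructor 1.
  have [->|vN'] := eqVneq v m.*2.+1; first by constructor 2.
  constructor 3; lia.
split.
- move=> v i /cases [vN|->|->] i0.
  + rewrite SN ho_old1 // ho_old2 //.
    have := HA v i vN i0; have := HD v vN.
    case: (odd _); case: i i0 => [|[|[|[|i]]]] //= _; lia.
  + rewrite Ca; case: i i0 => [|[|[|i]]] //= _; lia.
  + rewrite Cb; case: i i0 => [|[|[|[|i]]]] //= _; lia.
- move=> v /cases [vN|->|->].
  + rewrite Sold //; have := HB v vN; lia.
  + rewrite Sa; lia.
  + rewrite Sb; lia.
- move=> v w /cases [vN|->|->] /cases [wN|->|->] //;
    rewrite ?Sa ?Sb ?Sold //; try (have := HB v vN); try (have := HB w wN); try lia.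
  move=> _ _ H; apply: HC => //; lia.
- move=> v /cases [vN|->|->].
  + rewrite SN ho_old1 // ho_old2 // addnS oddS.
    have := HA v 2 vN isT.
    case: (odd _) => H; [by [] | lia].
  + by rewrite lvN addnn odd_double.
  + by rewrite lvN1 addnn odd_double.
Qed.

Lemma Inv_o_all m : Inv_o m.
Proof.
elim: m => [|m IH]; last exact: Inv_o_step.
split.
- by move=> [|v] //= i _ i0; rewrite gsvv; case: i i0.
- by move=> [|v].
- by move=> [|v] [|w].
- by move=> [|v].
Qed.

Lemma odd_upper n : 3 <= n -> odd n -> has_mNSD_coloring (complete_graph n) 3.
Proof.
move=> n3 on.
have [m ->] : exists m, n = m.*2.+1.
  exists n./2; rewrite -[n in n = _]odd_double_half on; lia.
case: (Inv_o_all m) => HA HB HC HD.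
apply: construct.
- by move=> v u _ _; exact: ho_range.
- move=> v i vN i0; have := HA v i vN i0; lia.
- exact: HC.
Qed.


Definition t6 (i j : nat) : nat :=
  match i, j with
  | 0, 1 => 1 | 0, 2 => 1 | 0, 3 => 2 | 0, 4 => 2 | 0, 5 => 3
  | 1, 2 => 1 | 1, 3 => 2 | 1, 4 => 2 | 1, 5 => 4
  | 2, 3 => 3 | 2, 4 => 4 | 2, 5 => 2
  | 3, 4 => 4 | 3, 5 => 1 | 4, 5 => 3
  | _, _ => 1 end.

Definition he (i j : nat) : nat :=
  if j < 6 then t6 i j else
  let m := j./2.-1 in
  if odd j && (i == m.*2.+2) then 2
  else if i <= m then (if odd j then 4 else 1)
  else if i == m.+1 then (if odd j then 2 else 3)
  else (if odd j then 3 else 2).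

Lemma t6_range i j : 1 <= t6 i j <= 4.
Proof. by case: i => [|[|[|[|[|i]]]]]; case: j => [|[|[|[|[|[|j]]]]]]. Qed.

Lemma he_range i j : 1 <= he i j <= 4.
Proof.
rewrite /he; case: ifP => _; first exact: t6_range.
by do ! case: ifP.
Qed.

Lemma he_gs v u : v != u -> 1 <= gs he v u <= 4.
Proof.
move=> H; rewrite /gs; case: ifP => H1; first exact: he_range.
case: ifP => H2; first exact: he_range.
lia.
Qed.

Lemma gs_le4 v u : gs he v u <= 4.
Proof.
rewrite /gs; case: ifP => _; first by case/andP: (he_range v u).
by case: ifP => _ //; case/andP: (he_range u v).
Qed.

Lemma cnt_big n F i : (forall u, F u <= 4) -> 4 < i ->
  sumf n (fun u => F u == i) = 0.
Proof.
move=> HF Hi; elim: n => //= n ->.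
have := HF n; case: eqP => //; lia.
Qed.

Lemma sum_pw m p q r :
  sumf m.*2.+2 (fun u => if u <= m then p else if u == m.+1 then q else r)
  = m.+1 * p + q + m * r.
Proof.
have -> : m.*2.+2 = m.+2 + m by lia.
rewrite sumf_cat sumfS eqxx ltnn.
rewrite (@sumf_ext _ _ (fun _ => p)); last by move=> u Hu; rewrite ifT //; lia.
rewrite (@sumf_ext m _ (fun _ => r)); last first.
  move=> u Hu /=; rewrite ifF; last by lia.
  by rewrite ifF //; apply/eqP; lia.
rewrite !sumf_const; lia.
Qed.

Definition Inv_e m :=
 [/\ forall v i, v < m.*2.+2 -> 0 < i -> sumf m.*2.+2 (fun u => gs he v u == i) <= m,
     forall v, v < m.*2.+2 -> 3*m+3 <= sumf m.*2.+2 (gs he v) <= 7*m+2 &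
     forall v w, v < m.*2.+2 -> w < m.*2.+2 ->
        sumf m.*2.+2 (gs he v) = sumf m.*2.+2 (gs he w) -> v = w].

Lemma Inv_e2 : Inv_e 2.
Proof.
have A : all (fun v => all (fun i => sumf 6 (fun u => gs he v u == i) <= 2) (iota 1 4)) (iota 0 6)
  by [].
have B : all (fun v => (9 <= sumf 6 (gs he v) <= 16)) (iota 0 6) by [].
have C : all (fun v => all (fun w => (sumf 6 (gs he v) == sumf 6 (gs he w)) ==> (v == w)) (iota 0 6)) (iota 0 6)
  by [].
split.
- move=> v i vN i0.
  have [i4|i4] := ltnP 4 i.
    by rewrite cnt_big // => u; apply: gs_le4.
  move/allP: A => /(_ v); rewrite mem_iota => /(_ vN) /allP /(_ i).
  rewrite mem_iota; apply; lia.
- by move=> v vN; move/allP: B => /(_ v); rewrite mem_iota; apply.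
- move=> v w vN wN E; move/allP: C => /(_ v); rewrite mem_iota => /(_ vN) /allP /(_ w).
  by rewrite mem_iota E eqxx => /(_ wN) /eqP.
Qed.

Lemma he_old1 m v : 2 <= m -> v < m.*2.+2 ->
  gs he v m.*2.+2 = if v <= m then 1 else if v == m.+1 then 3 else 2.
Proof.
move=> m2 H; rewrite /gs ifT // /he ifF; last by lia.
have -> : (m.*2.+2)./2.-1 = m by lia.
by rewrite !oddS odd_double.
Qed.

Lemma he_old2 m v : 2 <= m -> v < m.*2.+2 ->
  gs he v m.*2.+3 = if v <= m then 4 else if v == m.+1 then 2 else 3.
Proof.
move=> m2 H; rewrite /gs ifT; last by lia.
rewrite /he ifF; last by lia.
have -> : (m.*2.+3)./2.-1 = m by lia.
rewrite !oddS odd_double /= ifF //; apply/eqP; lia.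
Qed.

Lemma he_ab m : 2 <= m -> gs he m.*2.+2 m.*2.+3 = 2.
Proof.
move=> m2; rewrite /gs ltnSn /he ifF; last by lia.
have -> : (m.*2.+3)./2.-1 = m by lia.
by rewrite !oddS odd_double eqxx.
Qed.

Lemma Inv_e_step m : 2 <= m -> Inv_e m -> Inv_e m.+1.
Proof.
move=> m2 [HA HB HC].
have SN : forall F, sumf (m.+1).*2.+2 F = sumf m.*2.+2 F + F m.*2.+2 + F m.*2.+3.
  by move=> F; rewrite doubleS.
have Sold : forall v, v < m.*2.+2 -> sumf (m.+1).*2.+2 (gs he v) = sumf m.*2.+2 (gs he v) + 5.
  move=> v vN; rewrite SN he_old1 // he_old2 //; do ! case: ifP => _; lia.
have Ca : forall i, sumf (m.+1).*2.+2 (fun u => gs he m.*2.+2 u == i)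
    = m.+1 * (1 == i) + (3 == i) + m * (2 == i) + (0 == i) + (2 == i).
  move=> i; rewrite SN gsvv (he_ab m m2).
  rewrite (@sumf_ext _ _ (fun u => if u <= m then (1 == i) : nat else if u == m.+1 then (3 == i) : nat else (2 == i) : nat)).
    by rewrite sum_pw.
  by move=> u uN; rewrite gsC he_old1 //; do ! case: ifP.
have Cb : forall i, sumf (m.+1).*2.+2 (fun u => gs he m.*2.+3 u == i)
    = m.+1 * (4 == i) + (2 == i) + m * (3 == i) + (2 == i) + (0 == i).
  move=> i; rewrite SN gsvv (gsC _ m.*2.+3 m.*2.+2) (he_ab m m2).
  rewrite (@sumf_ext _ _ (fun u => if u <= m then (4 == i) : nat else if u == m.+1 then (2 == i) : nat else (3 == i) : nat)).
    by rewrite sum_pw.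
  by move=> u uN; rewrite gsC he_old2 //; do ! case: ifP.
have Sa : sumf (m.+1).*2.+2 (gs he m.*2.+2) = 3 * m + 6.
  rewrite SN gsvv (he_ab m m2).
  rewrite (@sumf_ext _ _ (fun u => if u <= m then 1 else if u == m.+1 then 3 else 2)).
    by rewrite sum_pw; lia.
  by move=> u uN; rewrite gsC he_old1.
have Sb : sumf (m.+1).*2.+2 (gs he m.*2.+3) = 7 * m + 8.
  rewrite SN gsvv (gsC _ m.*2.+3 m.*2.+2) (he_ab m m2).
  rewrite (@sumf_ext _ _ (fun u => if u <= m then 4 else if u == m.+1 then 2 else 3)).
    by rewrite sum_pw; lia.
  by move=> u uN; rewrite gsC he_old2.
have cases : forall v, v < (m.+1).*2.+2 -> [\/ v < m.*2.+2, v = m.*2.+2 | v = m.*2.+3].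
  move=> v; rewrite doubleS => H.
  have [vN|vN] := ltnP v m.*2.+2; first by constructor 1.
  have [->|vN'] := eqVneq v m.*2.+2; first by constructor 2.
  constructor 3; lia.
split.
- move=> v i /cases [vN|->|->] i0.
  + rewrite SN he_old1 // he_old2 //.
    have := HA v i vN i0.
    case: ifP => _; last case: ifP => _; case: i i0 => [|[|[|[|[|i]]]]] //= _; lia.
  + rewrite Ca; case: i i0 => [|[|[|[|i]]]] //= _; lia.
  + rewrite Cb; case: i i0 => [|[|[|[|[|i]]]]] //= _; lia.
- move=> v /cases [vN|->|->].
  + rewrite Sold //; have := HB v vN; lia.
  + rewrite Sa; lia.
  + rewrite Sb; lia.
- move=> v w /cases [vN|->|->] /cases [wN|->|->] //;
    rewrite ?Sa ?Sb ?Sold //; try (have := HB v vN); try (have := HB w wN); try lia.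
  move=> _ _ H; apply: HC => //; lia.
Qed.

Lemma Inv_e_all m : 2 <= m -> Inv_e m.
Proof.
elim: m => [|m IH] //; rewrite leq_eqVlt => /orP [/eqP <-|]; first exact: Inv_e2.
move=> m2; apply: Inv_e_step => //; exact: IH.
Qed.

Lemma even_upper n : 6 <= n -> ~~ odd n -> has_mNSD_coloring (complete_graph n) 4.
Proof.
move=> n6 en.
have [m [-> m2]] : exists m, n = m.*2.+2 /\ 2 <= m.
  exists (n./2).-1; split; last by lia.
  rewrite -[n in n = _]odd_double_half (negbTE en); lia.
case: (Inv_e_all m m2) => HA HB HC.
apply: construct.
- by move=> v u _ _; exact: he_gs.
- move=> v i vN i0; have := HA v i vN i0; lia.
- exact: HC.
Qed.


Definition h4 (i j : nat) : nat :=
  match i, j with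
  | 0, 1 => 1 | 0, 2 => 2 | 0, 3 => 3 | 1, 2 => 3 | 1, 3 => 4 | 2, 3 => 5
  | _, _ => 1 end.

Lemma cnt_bigk n k F i : (forall u, F u <= k) -> k < i ->
  sumf n (fun u => F u == i) = 0.
Proof.
move=> HF Hi; elim: n => //= n ->.
have := HF n; case: eqP => //; lia.
Qed.

Lemma h4_le v u : gs h4 v u <= 5.
Proof.
rewrite /gs; case: ifP => _; last case: ifP => _ //.
  by case: v => [|[|[|[|v]]]]; case: u => [|[|[|[|u]]]].
by case: v => [|[|[|[|v]]]]; case: u => [|[|[|[|u]]]].
Qed.

Lemma K4_upper : has_mNSD_coloring (complete_graph 4) 5.
Proof.
have A : all (fun v => all (fun i => 2 * sumf 4 (fun u => gs h4 v u == i) <= 3) (iota 1 5)) (iota 0 4)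
  by [].
have C : all (fun v => all (fun w => (sumf 4 (gs h4 v) == sumf 4 (gs h4 w)) ==> (v == w)) (iota 0 4)) (iota 0 4)
  by [].
apply: (@construct 4 5 h4).
- move=> v u vN uN; case: v vN => [|[|[|[|v]]]] //; case: u uN => [|[|[|[|u]]]] //.
- move=> v i vN i0.
  have [i5|i5] := ltnP 5 i.
    by rewrite (@cnt_bigk _ 5) // => u; apply: h4_le.
  move/allP: A => /(_ v); rewrite mem_iota => /(_ vN) /allP /(_ i).
  rewrite mem_iota; apply; lia.
- move=> v w vN wN E; move/allP: C => /(_ v); rewrite mem_iota => /(_ vN) /allP /(_ w).
  by rewrite mem_iota E eqxx => /(_ wN) /eqP.
Qed.

Lemma decomp n j c (v : 'I_n) : is_k_edge_coloring (complete_graph n) j c -> j <= 4 ->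
  majority (complete_graph n) c ->
  let cnt i := #|[set u | complete_graph n v u & c [set v; u] == i]| in
  [/\ sigma (complete_graph n) c v = cnt 1 + 2 * cnt 2 + 3 * cnt 3 + 4 * cnt 4,
      n.-1 = cnt 1 + cnt 2 + cnt 3 + cnt 4,
      (j <= 3 -> cnt 4 = 0), (j <= 2 -> cnt 3 = 0) &
      forall i, 2 * cnt i <= n.-1].
Proof.
move=> Hc j4 Hm cnt.
have E : forall i, cnt i = \sum_(u | complete_graph n v u) (c [set v; u] == i : nat).
  by move=> i; rewrite /cnt (@card_sum_pq n (fun u => complete_graph n v u) (fun u => c [set v; u] == i)).
split.
- rewrite /sigma !E !big_distrr /= -!big_split /=; apply: eq_bigr => u vu.
  have := Hc v u vu; case: (c _) => [|[|[|[|[|x]]]]] //= H; lia.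
- rewrite -(deg_complete n v) /deg -sum1_card.
  rewrite (eq_bigl (fun u => complete_graph n v u)); last by move=> u; rewrite inE.
  rewrite !E -!big_split /=; apply: eq_bigr => u vu.
  have := Hc v u vu; case: (c _) => [|[|[|[|[|x]]]]] //= H; lia.
- move=> j3; rewrite E big1 // => u vu; have := Hc v u vu; case: eqP => // ->; lia.
- move=> j2; rewrite E big1 // => u vu; have := Hc v u vu; case: eqP => // ->; lia.
- by move=> i; rewrite -(deg_complete n v); apply: Hm.
Qed.

Lemma pigeon n (f : 'I_n -> nat) lo len : injective f ->
  (forall v, lo <= f v < lo + len) -> n <= len.
Proof.
move=> inj H.
have := @uniq_leq_size _ (map f (enum 'I_n)) (iota lo len).
rewrite map_inj_uniq // enum_uniq size_map size_enum_ord size_iota => /(_ isT); apply.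
move=> x /mapP [v _ ->]; rewrite mem_iota; exact: H.
Qed.

Lemma handshake n (c : {set 'I_n} -> nat) (i : nat) :
  ~~ odd (\sum_(v : 'I_n) #|[set u | complete_graph n v u & c [set v; u] == i]|).
Proof.
pose Y (v u : 'I_n) : nat := (v != u) && (c [set v; u] == i).
have sym : forall v u, Y v u = Y u v by move=> v u; rewrite /Y eq_sym setUC.
rewrite (eq_bigr (fun v => \sum_u Y v u * (v < u) + \sum_u Y v u * (u < v))); last first.
  move=> v _; rewrite (@card_sum_pq n (fun u => complete_graph n v u) (fun u => c [set v; u] == i)) big_mkcond -big_split /=; apply: eq_bigr => u _.
  rewrite /Y /complete_graph; case: eqP => [->|/eqP vu] /=; first by rewrite ltnn.
  have : (v : nat) != u by [].
  case: (c _ == i) => /=; case: ltngtP => //.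
rewrite big_split /= [X in _ + X]exchange_big /=.
rewrite [X in _ + X](eq_bigr (fun v => \sum_u Y v u * (v < u))).
  by rewrite addnn odd_double.
by move=> v _; apply: eq_bigr => u _; rewrite sym.
Qed.

Lemma odd_lower n j : 3 <= n -> odd n -> j < 3 -> ~ has_mNSD_coloring (complete_graph n) j.
Proof.
move=> n3 on j3 [c [Hc Hm Hn]].
have j4 : j <= 4 by lia.
have key : forall v : 'I_n, 2 * sigma (complete_graph n) c v = 3 * n.-1.
  move=> v; move: (@decomp _ _ _ v Hc j4 Hm) => /= [S D H4 H3 M].
  have := M 1; have := M 2; have := H4 ltac:(lia); have := H3 ltac:(lia); rewrite S; lia.
have h0 : 0 < n by lia.
have h1 : 1 < n by lia.
apply: (Hn (Ordinal h0) (Ordinal h1)) => //.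
have := key (Ordinal h0); have := key (Ordinal h1); lia.
Qed.

Lemma even_lower n j : 6 <= n -> ~~ odd n -> j < 4 -> ~ has_mNSD_coloring (complete_graph n) j.
Proof.
move=> n6 en j4 [c [Hc Hm Hn]].
have [m [En m2]] : exists m, n = m.*2.+2 /\ 2 <= m.
  exists (n./2).-1; split; last by lia.
  rewrite -[n in n = _]odd_double_half (negbTE en); lia.
have inj : injective (sigma (complete_graph n) c).
  move=> x y E; apply/eqP; apply/negPn/negP => xy; exact: (Hn x y xy E).
have := @pigeon n (sigma (complete_graph n) c) (3*m+3) (2*m-1) inj.
suff H : forall v, 3*m+3 <= sigma (complete_graph n) c v < 3*m+3 + (2*m-1).
  move=> /(_ H); lia.
move=> v; move: (@decomp _ _ _ v Hc (ltnW j4) Hm) => /= [S D H4 _ M].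
have := M 1; have:= M 2; have := M 3.
have := H4 j4; rewrite S; lia.
Qed.

Lemma K4_lower j : j < 5 -> ~ has_mNSD_coloring (complete_graph 4) j.
Proof.
move=> j5 [c [Hc Hm Hn]].
have inj : injective (sigma (complete_graph 4) c).
  move=> x y E; apply/eqP; apply/negPn/negP => xy; exact: (Hn x y xy E).
have F : forall v : 'I_4, 6 <= sigma (complete_graph 4) c v <= 9 /\
   #|[set u | complete_graph 4 v u & c [set v; u] == 4]| = (sigma (complete_graph 4) c v != 6).
  move=> v; move: (@decomp _ _ _ v Hc j5 Hm) => /= [S D _ _ M].
  have := M 1; have:= M 2; have := M 3; have := M 4.
  rewrite S /= => m4 m3 m2 m1; split; first lia.
  case: eqP => H; lia.
case: (pickP (fun v => sigma (complete_graph 4) c v == 6)) => [v0 /eqP Hv0 | none].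
- have := @handshake 4 c 4.
  rewrite (eq_bigr (fun v => (v != v0) : nat)); last first.
    by move=> v _; rewrite (proj2 (F v)) -Hv0 (inj_eq inj).
  rewrite (bigD1 v0) //= eqxx add0n.
  rewrite (eq_bigr (fun _ => 1)); last by move=> v ->.
  by rewrite sum1_card cardC1 card_ord.
- have := @pigeon 4 (sigma (complete_graph 4) c) 7 3 inj.
  suff H : forall v, 7 <= sigma (complete_graph 4) c v < 7 + 3 by move=> /(_ H).
  move=> v; have := none v; have := proj1 (F v) => /= H1 H2.
  move/eqP: H2; lia.
Qed.

Theorem mainTheorem8 :
  (forall n : nat, 3 <= n -> odd n -> chi_mSigma_eq (complete_graph n) 3) /\
  (forall n : nat, 6 <= n -> ~~ odd n -> chi_mSigma_eq (complete_graph n) 4) /\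
  chi_mSigma_eq (complete_graph 4) 5.
Proof.
split; [|split].
- move=> n n3 on; split; first exact: odd_upper.
  move=> j jl; exact: odd_lower n3 on jl.
- move=> n n6 en; split; first exact: even_upper.
  move=> j jl; exact: even_lower n6 en jl.
- split; first exact: K4_upper.
  move=> j jl; exact: K4_lower jl.
Qed.
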